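(* Let $p>7$ be prime, $q=p^h$, $n>3$, and let $\mathcal{F}: aX^n+bY^n=Z^n$ be an irreducible Fermat curve defined over $\mathbb{F}_q$. If $\mathcal{F}$ is nonclassical with respect to either $\Sigma_1$ or $\Sigma_2$, then $\mathcal{F}$ is nonclassical with respect to $\Sigma_3$.
   Context: The function field of $\mathcal{F}$ over $\overline{\mathbb{F}}_q$ is $\overline{\mathbb{F}}_q(x,y)$ with $ax^n+by^n=1$. For $s\ge1$, $\Sigma_s$ is the linear system of all plane curves of degree $s$ and $M=\binom{s+2}{2}-1$. The order sequence $(\varepsilon_0,\dots,\varepsilon_M)$ of $\mathcal{F}$ with respect to $\Sigma_s$ is the lexicographically minimal increasing sequence of nonnegative integers such that $\det\big(D_t^{(\varepsilon_k)}(x^iy^j)\big)_{0\le k\le M,\ 0\le i+j\le s}\neq 0$, where $t$ is a separating variable and $D_t^{(r)}$ denotes the $r$-th Hasse derivative; equivalently, it is the common sequence, for all but finitely many $P\in\mathcal{F}$, of the $M+1$ distinct values $I(P,\mathcal{F}\cap\mathcal{C})$ for curves $\mathcal{C}$ of degree $s$. $\mathcal{F}$ is classical with respect to $\Sigma_s$ if $\varepsilon_i=i$ for all $i$, nonclassical otherwise. *)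

(* Defs.v *)
From HB Require Import structures.
From mathcomp Require Import all_boot all_order all_algebra all_field.
Set Implicit Arguments. Unset Strict Implicit. Unset Printing Implicit Defensive.
Import Order.TTheory GRing.Theory Num.Theory.
Local Open Scope ring_scope.

(* An algebraic closure of the prime field F_p (the algebraic closure of F_q). *)
Definition Fbar (p : nat) : countClosedFieldType :=
  projT1 (countable_algebraic_closure 'F_p).

Definition irreducible_elt (R : idomainType) (f : R) : Prop :=
  f != 0 /\ f \isn't a GRing.unit /\
  forall g h : R, f = g * h -> g \is a GRing.unit \/ h \is a GRing.unit.

(* The affine equation a X^n + b Y^n - 1 of the Fermat curve aX^n+bY^n=Z^n,
   as an element of K[X][Y] (outer variable Y, inner variable X). *)
Definition fermat_poly (K : fieldType) (a b : K) (n : nat) : {poly {poly K}} :=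
  (a%:P * 'X^n)%:P + (b%:P)%:P * 'X^n - 1.

Definition eval2 (K L : fieldType) (iota : {rmorphism K -> L})
  (P : {poly {poly K}}) (x y : L) : L :=
  (map_poly (fun c : {poly K} => (map_poly iota c).[x]) P).[y].

Definition generated_by (K L : fieldType) (iota : {rmorphism K -> L}) (x y : L)
  : Prop :=
  forall z : L, exists P Q : {poly {poly K}},
    eval2 iota Q x y != 0 /\ z = eval2 iota P x y / eval2 iota Q x y.

(* D = (D^{(r)})_r is the family of Hasse derivatives with respect to the
   separating variable x on L, over the constant field iota(K):
   a Hasse-Schmidt derivation that kills constants and with D^{(r)} x = [r = 1]
   for r >= 1. *)
Definition hasse_wrt (K L : fieldType) (iota : {rmorphism K -> L}) (x : L)
  (D : nat -> L -> L) : Prop :=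
  [/\ forall f, D 0%N f = f,
      forall r f g, D r (f + g) = D r f + D r g,
      forall r f g, D r (f * g) = \sum_(i < r.+1) D i f * D (r - i)%N g,
      forall r c, (0 < r)%N -> D r (iota c) = 0 &
      forall r, (0 < r)%N -> D r x = (r == 1%N)%:R].

(* The monomials x^i y^j with 0 <= i + j <= s. *)
Definition mons (s : nat) : seq (nat * nat) :=
  [seq (i, j) | i <- iota 0 s.+1, j <- iota 0 (s.+1 - i)].

Definition Mdim (s : nat) : nat := ('C(s.+2, 2)).-1.

Lemma size_mons1 : size (mons 1) = (Mdim 1).+1. Proof. by []. Qed.
Lemma size_mons2 : size (mons 2) = (Mdim 2).+1. Proof. by []. Qed.
Lemma size_mons3 : size (mons 3) = (Mdim 3).+1. Proof. by []. Qed.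

Definition wmat (L : fieldType) (D : nat -> L -> L) (x y : L) (s : nat)
  (eps : 'I_(Mdim s).+1 -> nat) : 'M[L]_((Mdim s).+1) :=
  \matrix_(k, c) D (eps k) (x ^+ (nth (0%N, 0%N) (mons s) c).1
                            * y ^+ (nth (0%N, 0%N) (mons s) c).2).

Definition increasing_seq (m : nat) (eps : 'I_m -> nat) : Prop :=
  forall i j : 'I_m, (i < j)%N -> (eps i < eps j)%N.

Definition lex_le (m : nat) (e1 e2 : 'I_m -> nat) : Prop :=
  (forall i, e1 i = e2 i) \/
  exists i : 'I_m, (e1 i < e2 i)%N /\ (forall j : 'I_m, (j < i)%N -> e1 j = e2 j).

(* eps is the order sequence of the curve w.r.t. Sigma_s *)
Definition is_order_seq (L : fieldType) (D : nat -> L -> L) (x y : L) (s : nat)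
  (eps : 'I_(Mdim s).+1 -> nat) : Prop :=
  [/\ increasing_seq eps, \det (wmat D x y eps) != 0 &
      forall eps', increasing_seq eps' -> \det (wmat D x y eps') != 0 ->
        lex_le eps eps'].

Definition classical (L : fieldType) (D : nat -> L -> L) (x y : L) (s : nat)
  : Prop :=
  is_order_seq D x y (fun k : 'I_(Mdim s).+1 => nat_of_ord k).

Definition nonclassical (L : fieldType) (D : nat -> L -> L) (x y : L) (s : nat)
  : Prop := ~ classical D x y s.

(* Main.v *)
Require Import Defs.
From HB Require Import structures.
From mathcomp Require Import all_boot all_order all_algebra all_field.
From mathcomp Require Import ring lra zify.
Import GRing.Theory.
Local Open Scope ring_scope.
Set Implicit Arguments. Unset Strict Implicit. Unset Printing Implicit Defensive.

Section Trunc.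
Variable L : fieldType.
Definition eqm (N : nat) (P Q : {poly L}) := forall k, (k < N)%N -> P`_k = Q`_k.

Lemma eqm_refl N P : eqm N P P. Proof. by []. Qed.
Lemma eqm_sym N P Q : eqm N P Q -> eqm N Q P. Proof. by move=> h k hk; rewrite h. Qed.
Lemma eqm_trans N P Q R : eqm N P Q -> eqm N Q R -> eqm N P R.
Proof. by move=> h1 h2 k hk; rewrite h1 // h2. Qed.
Lemma eqm_le N M P Q : (N <= M)%N -> eqm M P Q -> eqm N P Q.
Proof. by move=> hNM h k hk; apply: h; apply: leq_trans hNM. Qed.
Lemma eqmD N P Q P' Q' : eqm N P P' -> eqm N Q Q' -> eqm N (P + Q) (P' + Q').
Proof. by move=> h1 h2 k hk; rewrite !coefD h1 // h2. Qed.
Lemma eqmN N P P' : eqm N P P' -> eqm N (- P) (- P').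
Proof. by move=> h1 k hk; rewrite !coefN h1. Qed.
Lemma eqmM N P Q P' Q' : eqm N P P' -> eqm N Q Q' -> eqm N (P * Q) (P' * Q').
Proof.
move=> h1 h2 k hk; rewrite !coefM; apply: eq_bigr => -[i /= hi] _.
rewrite h1; last by apply: leq_ltn_trans hk.
by rewrite h2 //; apply: leq_ltn_trans hk; rewrite leq_subr.
Qed.
Lemma eqmMn N P P' m : eqm N P P' -> eqm N (P *+ m) (P' *+ m).
Proof. by move=> h k hk; rewrite !coefMn h. Qed.
Lemma eqmX N P P' m : eqm N P P' -> eqm N (P ^+ m) (P' ^+ m).
Proof. move=> h; elim: m => [|m IH] //; rewrite !exprS; exact: eqmM. Qed.
Lemma eqm_deriv N P Q : eqm N.+1 P Q -> eqm N P^`() Q^`().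
Proof. by move=> h k hk; rewrite !coef_deriv h. Qed.
End Trunc.

Section Taylor.
Variables (L : fieldType) (D : nat -> L -> L).
Hypothesis D0 : forall f, D 0%N f = f.
Hypothesis DD : forall r f g, D r (f + g) = D r f + D r g.
Hypothesis DM : forall r f g, D r (f * g) = \sum_(i < r.+1) D i f * D (r - i)%N g.
Hypothesis D1 : forall r, (0 < r)%N -> D r 1 = 0.

Definition Tay (f : L) : {poly L} := \poly_(i < 10) D i f.

Lemma coef_Tay f k : (k < 10)%N -> (Tay f)`_k = D k f.
Proof. by move=> hk; rewrite coef_poly hk. Qed.

Lemma TayD f g : Tay (f + g) = Tay f + Tay g.
Proof.
by apply/polyP => k; rewrite coefD !coef_poly; case: (k < 10)%N; rewrite ?DD ?addr0.
Qed.

Lemma TayM f g : eqm 10 (Tay (f * g)) (Tay f * Tay g).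
Proof.
move=> k hk; rewrite coef_Tay // DM coefM; apply: eq_bigr => -[i /= hi] _.
rewrite !coef_Tay //; first by apply: leq_ltn_trans hk; rewrite leq_subr.
by apply: leq_ltn_trans hk.
Qed.

Lemma TayX f m : eqm 10 (Tay (f ^+ m)) (Tay f ^+ m).
Proof.
elim: m => [|m IH].
  move=> k hk; rewrite expr0 coef_Tay // coef1.
  by case: k hk => [|k] _; rewrite ?D0 // D1.
rewrite exprS; apply: eqm_trans (TayM _ _) _; rewrite exprS; exact: eqmM.
Qed.
End Taylor.

Ltac fs := field; repeat (apply/andP; split); try assumption.
Section Alg.
Variable L : fieldType.
Definition E1 (nu z : L) : L := (0 - (1%:R*z^+1)).
Definition E2 (nu z : L) : L := (0 + (1%:R/2%:R*z^+1) + (1%:R/2%:R*z^+2) - (1%:R/2%:R*nu^+1*z^+1) - (1%:R/2%:R*nu^+1*z^+2)).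
Definition E3 (nu z : L) : L := (0 - (1%:R/3%:R*z^+1) - (1%:R/2%:R*z^+2) - (1%:R/6%:R*z^+3) + (1%:R/2%:R*nu^+1*z^+1) + (1%:R*nu^+1*z^+2) + (1%:R/2%:R*nu^+1*z^+3) - (1%:R/6%:R*nu^+2*z^+1) - (1%:R/2%:R*nu^+2*z^+2) - (1%:R/3%:R*nu^+2*z^+3)).
Definition E4 (nu z : L) : L := (0 + (1%:R/4%:R*z^+1) + (11%:R/24%:R*z^+2) + (1%:R/4%:R*z^+3) + (1%:R/24%:R*z^+4) - (11%:R/24%:R*nu^+1*z^+1) - (29%:R/24%:R*nu^+1*z^+2) - (1%:R*nu^+1*z^+3) - (1%:R/4%:R*nu^+1*z^+4) + (1%:R/4%:R*nu^+2*z^+1) + (25%:R/24%:R*nu^+2*z^+2) + (5%:R/4%:R*nu^+2*z^+3) + (11%:R/24%:R*nu^+2*z^+4) - (1%:R/24%:R*nu^+3*z^+1) - (7%:R/24%:R*nu^+3*z^+2) - (1%:R/2%:R*nu^+3*z^+3) - (1%:R/4%:R*nu^+3*z^+4)).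
Definition E5 (nu z : L) : L := (0 - (1%:R/5%:R*z^+1) - (5%:R/12%:R*z^+2) - (7%:R/24%:R*z^+3) - (1%:R/12%:R*z^+4) - (1%:R/120%:R*z^+5) + (5%:R/12%:R*nu^+1*z^+1) + (31%:R/24%:R*nu^+1*z^+2) + (11%:R/8%:R*nu^+1*z^+3) + (7%:R/12%:R*nu^+1*z^+4) + (1%:R/12%:R*nu^+1*z^+5) - (7%:R/24%:R*nu^+2*z^+1) - (35%:R/24%:R*nu^+2*z^+2) - (55%:R/24%:R*nu^+2*z^+3) - (17%:R/12%:R*nu^+2*z^+4) - (7%:R/24%:R*nu^+2*z^+5) + (1%:R/12%:R*nu^+3*z^+1) + (17%:R/24%:R*nu^+3*z^+2) + (13%:R/8%:R*nu^+3*z^+3) + (17%:R/12%:R*nu^+3*z^+4) + (5%:R/12%:R*nu^+3*z^+5) - (1%:R/120%:R*nu^+4*z^+1) - (1%:R/8%:R*nu^+4*z^+2) - (5%:R/12%:R*nu^+4*z^+3) - (1%:R/2%:R*nu^+4*z^+4) - (1%:R/5%:R*nu^+4*z^+5)).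
Lemma ycoefs (x y u nu p1 p2 p3 p4 p5 y1 y2 y3 y4 y5 : L)
  (hx : x != 0) (hu : 1 - u != 0)
  (h2 : 2%:R != 0 :> L) (h3 : 3%:R != 0 :> L) (h5 : 5%:R != 0 :> L)
  (hp1 : x * 1%:R * p1 + 0%:R * u = nu * u)
  (hp2 : x * 2%:R * p2 + 1%:R * p1 = nu * p1)
  (hp3 : x * 3%:R * p3 + 2%:R * p2 = nu * p2)
  (hp4 : x * 4%:R * p4 + 3%:R * p3 = nu * p3)
  (hp5 : x * 5%:R * p5 + 4%:R * p4 = nu * p4)
  (hR0 : u*y + (0%:R*y + x*1%:R*y1) - u*(0%:R*y + x*1%:R*y1) = 0)
  (hR1 : u*y1 + p1*y + (1%:R*y1 + x*2%:R*y2) - u*(1%:R*y1 + x*2%:R*y2) - p1*(0%:R*y + x*1%:R*y1) = 0)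
  (hR2 : u*y2 + p1*y1 + p2*y + (2%:R*y2 + x*3%:R*y3) - u*(2%:R*y2 + x*3%:R*y3) - p1*(1%:R*y1 + x*2%:R*y2) - p2*(0%:R*y + x*1%:R*y1) = 0)
  (hR3 : u*y3 + p1*y2 + p2*y1 + p3*y + (3%:R*y3 + x*4%:R*y4) - u*(3%:R*y3 + x*4%:R*y4) - p1*(2%:R*y2 + x*3%:R*y3) - p2*(1%:R*y1 + x*2%:R*y2) - p3*(0%:R*y + x*1%:R*y1) = 0)
  (hR4 : u*y4 + p1*y3 + p2*y2 + p3*y1 + p4*y + (4%:R*y4 + x*5%:R*y5) - u*(4%:R*y4 + x*5%:R*y5) - p1*(3%:R*y3 + x*4%:R*y4) - p2*(2%:R*y2 + x*3%:R*y3) - p3*(1%:R*y1 + x*2%:R*y2) - p4*(0%:R*y + x*1%:R*y1) = 0) :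
  let z := u / (1 - u) in
  [/\ y1 = y * E1 nu z / x, y2 = y * E2 nu z / x^+2, y3 = y * E3 nu z / x^+3,
      y4 = y * E4 nu z / x^+4 & y5 = y * E5 nu z / x^+5].
Proof.
move=> z.
have hxk : forall k, x ^+ k != 0 by move=> k; rewrite expf_neq0.
have h1 : (1%:R : L) != 0 by exact: oner_neq0.
have h4 : 4%:R != 0 :> L by rewrite (natrM L 2 2) mulf_neq0.
have h6 : 6%:R != 0 :> L by rewrite (natrM L 2 3) mulf_neq0.
have h8 : 8%:R != 0 :> L by rewrite (natrM L 2 4) mulf_neq0.
have h12 : 12%:R != 0 :> L by rewrite (natrM L 2 6) mulf_neq0.
have h24 : 24%:R != 0 :> L by rewrite (natrM L 2 12) mulf_neq0.
have h120 : 120%:R != 0 :> L by rewrite (natrM L 5 24) mulf_neq0.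
have e1 : p1 = nu * u / x.
  have -> : p1 = (x * 1%:R * p1 + 0%:R * u) / x by fs.
  by rewrite hp1.
have e2 : p2 = nu * (nu - 1) * u / (2%:R * x ^+ 2).
  have -> : p2 = ((x * 2%:R * p2 + 1%:R * p1) - 1%:R * p1) / (x * 2%:R) by fs.
  rewrite hp2 e1; fs.
have e3 : p3 = nu * (nu - 1) * (nu - 2) * u / (6%:R * x ^+ 3).
  have -> : p3 = ((x * 3%:R * p3 + 2%:R * p2) - 2%:R * p2) / (x * 3%:R) by fs.
  rewrite hp3 e2; fs.
have e4 : p4 = nu * (nu - 1) * (nu - 2) * (nu - 3) * u / (24%:R * x ^+ 4).
  have -> : p4 = ((x * 4%:R * p4 + 3%:R * p3) - 3%:R * p3) / (x * 4%:R) by fs.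
  rewrite hp4 e3; fs.
have e5 : p5 = nu * (nu - 1) * (nu - 2) * (nu - 3) * (nu - 4) * u / (120%:R * x ^+ 5).
  have -> : p5 = ((x * 5%:R * p5 + 4%:R * p4) - 4%:R * p4) / (x * 5%:R) by fs.
  rewrite hp5 e4; fs.
have f1 : y1 = y * E1 nu z / x ^+ 1.
  apply/eqP; rewrite -subr_eq0.
  have : x * 1%:R * (1 - u) * (y1 - y * E1 nu z / x ^+ 1) = 0.
    rewrite -[RHS]hR0  ?e1 ?e2 ?e3 ?e4 ?e5 /z; unfold E1, E2, E3, E4, E5; fs.
  by move/eqP; rewrite !mulf_eq0 (negbTE hx) (negbTE hu) (negbTE h1) /=; exact: id.
have f2 : y2 = y * E2 nu z / x ^+ 2.
  apply/eqP; rewrite -subr_eq0.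
  have : x * 2%:R * (1 - u) * (y2 - y * E2 nu z / x ^+ 2) = 0.
    rewrite -[RHS]hR1 ?f1 ?e1 ?e2 ?e3 ?e4 ?e5 /z; unfold E1, E2, E3, E4, E5; fs.
  by move/eqP; rewrite !mulf_eq0 (negbTE hx) (negbTE hu) (negbTE h2) /=; exact: id.
have f3 : y3 = y * E3 nu z / x ^+ 3.
  apply/eqP; rewrite -subr_eq0.
  have : x * 3%:R * (1 - u) * (y3 - y * E3 nu z / x ^+ 3) = 0.
    rewrite -[RHS]hR2 ?f1 ?f2 ?e1 ?e2 ?e3 ?e4 ?e5 /z; unfold E1, E2, E3, E4, E5; fs.
  by move/eqP; rewrite !mulf_eq0 (negbTE hx) (negbTE hu) (negbTE h3) /=; exact: id.
have f4 : y4 = y * E4 nu z / x ^+ 4.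
  apply/eqP; rewrite -subr_eq0.
  have : x * 4%:R * (1 - u) * (y4 - y * E4 nu z / x ^+ 4) = 0.
    rewrite -[RHS]hR3 ?f1 ?f2 ?f3 ?e1 ?e2 ?e3 ?e4 ?e5 /z; unfold E1, E2, E3, E4, E5; fs.
  by move/eqP; rewrite !mulf_eq0 (negbTE hx) (negbTE hu) (negbTE h4) /=; exact: id.
have f5 : y5 = y * E5 nu z / x ^+ 5.
  apply/eqP; rewrite -subr_eq0.
  have : x * 5%:R * (1 - u) * (y5 - y * E5 nu z / x ^+ 5) = 0.
    rewrite -[RHS]hR4 ?f1 ?f2 ?f3 ?f4 ?e1 ?e2 ?e3 ?e4 ?e5 /z; unfold E1, E2, E3, E4, E5; fs.
  by move/eqP; rewrite !mulf_eq0 (negbTE hx) (negbTE hu) (negbTE h5) /=; exact: id.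
by split; rewrite ?expr1.
Qed.


Definition det3 (a11 a12 a13 a21 a22 a23 a31 a32 a33 : L) : L :=
  a11 * (a22 * a33 - a23 * a32) - a12 * (a21 * a33 - a23 * a31) + a13 * (a21 * a32 - a22 * a31).

Lemma det3_ker (a11 a12 a13 a21 a22 a23 a31 a32 a33 v1 v2 v3 : L) :
  a11 * v1 + a12 * v2 + a13 * v3 = 0 ->
  a21 * v1 + a22 * v2 + a23 * v3 = 0 ->
  a31 * v1 + a32 * v2 + a33 * v3 = 0 ->
  det3 a11 a12 a13 a21 a22 a23 a31 a32 a33 != 0 -> [/\ v1 = 0, v2 = 0 & v3 = 0].
Proof.
move=> e1 e2 e3 hd; set d := det3 _ _ _ _ _ _ _ _ _ in hd.
have k1 : d * v1 = (a22 * a33 - a23 * a32) * (a11 * v1 + a12 * v2 + a13 * v3)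
   - (a12 * a33 - a13 * a32) * (a21 * v1 + a22 * v2 + a23 * v3)
   + (a12 * a23 - a13 * a22) * (a31 * v1 + a32 * v2 + a33 * v3) by rewrite /d /det3; ring.
have k2 : d * v2 = - (a21 * a33 - a23 * a31) * (a11 * v1 + a12 * v2 + a13 * v3)
   + (a11 * a33 - a13 * a31) * (a21 * v1 + a22 * v2 + a23 * v3)
   - (a11 * a23 - a13 * a21) * (a31 * v1 + a32 * v2 + a33 * v3) by rewrite /d /det3; ring.
have k3 : d * v3 = (a21 * a32 - a22 * a31) * (a11 * v1 + a12 * v2 + a13 * v3)
   - (a11 * a32 - a12 * a31) * (a21 * v1 + a22 * v2 + a23 * v3)
   + (a11 * a22 - a12 * a21) * (a31 * v1 + a32 * v2 + a33 * v3) by rewrite /d /det3; ring.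
rewrite e1 e2 e3 !mulr0 ?subr0 ?addr0 ?oppr0 ?mul0r in k1 k2 k3.
move/eqP: k1; move/eqP: k2; move/eqP: k3; rewrite !mulf_eq0 (negbTE hd) /=.
by do 3 move/eqP=> ->.
Qed.

Lemma det_fact (x y u nu y1 y2 y3 y4 y5 : L)
  (hx : x != 0) (hu : 1 - u != 0)
  (h2 : 2%:R != 0 :> L) (h3 : 3%:R != 0 :> L) (h5 : 5%:R != 0 :> L) :
  let z := u / (1 - u) in
  y1 = y * E1 nu z / x -> y2 = y * E2 nu z / x^+2 -> y3 = y * E3 nu z / x^+3 ->
  y4 = y * E4 nu z / x^+4 -> y5 = y * E5 nu z / x^+5 ->
  det3 y3 (y*y3 + y1*y2 + y2*y1 + y3*y) y2 y4 (y*y4 + y1*y3 + y2*y2 + y3*y1 + y4*y) y3 y5 (y*y5 + y1*y4 + y2*y3 + y3*y2 + y4*y1 + y5*y) y4 =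
   y^+4 / x^+11 / 8640%:R * ((nu - 1)^+4 * (2%:R * nu - 1) * (nu - 2%:R) * (nu + 1))
   * (z^+4 * (1 + z)^+4 * (z - 1) * (2%:R * z + 1) * (z + 2%:R)).
Proof.
move=> z -> -> -> -> ->.
have h4 : 4%:R != 0 :> L by rewrite (natrM L 2 2) mulf_neq0.
have h6 : 6%:R != 0 :> L by rewrite (natrM L 2 3) mulf_neq0.
have h8 : 8%:R != 0 :> L by rewrite (natrM L 2 4) mulf_neq0.
have h12 : 12%:R != 0 :> L by rewrite (natrM L 2 6) mulf_neq0.
have h24 : 24%:R != 0 :> L by rewrite (natrM L 2 12) mulf_neq0.
have h120 : 120%:R != 0 :> L by rewrite (natrM L 5 24) mulf_neq0.
have h8640 : 8640%:R != 0 :> L by rewrite (natrM L 120 72) (natrM L 8 9) (natrM L 3 3) !mulf_neq0.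
rewrite /det3 /z; unfold E1, E2, E3, E4, E5; fs.
Qed.
End Alg.

Lemma frobD (R : comNzRingType) (p : nat) (x y : R) :
  p \in [pchar R] -> (x + y) ^+ p = x ^+ p + y ^+ p.
Proof.
move=> hp; rewrite -!(pFrobenius_autE hp); apply: pFrobenius_autD_comm; exact: mulrC.
Qed.

Lemma char_Fbar p : prime p -> p \in [pchar (Fbar p)].
Proof.
move=> pp; exact: (rmorph_pchar (projT1 (projT2 (countable_algebraic_closure 'F_p))) (pchar_Fp pp)).
Qed.

Lemma closed_root (K : closedFieldType) (m : nat) (a : K) : (0 < m)%N ->
  exists r : K, r ^+ m = a.
Proof.
move=> hm; have [r hr] := @solve_monicpoly K m (fun i => if i == 0%N then a else 0) hm.
exists r; rewrite hr; case: m hm {hr} => // m _.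
rewrite big_ord_recl /= expr0 mulr1 big1 ?addr0 // => i _.
by rewrite mul0r.
Qed.

Lemma irr_ndvd p n (a b : Fbar p) : prime p -> (2 < p)%N -> (0 < n)%N ->
  irreducible_elt (fermat_poly a b n) -> ~~ (p %| n)%N.
Proof.
move=> pp p2 n0 [F0 [Fnu Firr]]; apply/negP => /dvdnP [m hm].
have hc := char_Fbar pp.
have hcP : p \in [pchar {poly {poly Fbar p}}] by rewrite !pchar_poly.
have [al hal] := closed_root a (prime_gt0 pp).
have [be hbe] := closed_root b (prime_gt0 pp).
set G : {poly {poly Fbar p}} := (al%:P * 'X^m)%:P + (be%:P)%:P * 'X^m - 1.
have hG : fermat_poly a b n = G * G ^+ p.-1.
  rewrite -exprS prednK ?prime_gt0 // /G /fermat_poly.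
  rewrite (frobD _ _ hcP) (frobD _ _ hcP) -!rmorphXn /= !exprMn -!rmorphXn /= hal hbe.
  rewrite -!exprM -hm.
  have op : odd p by case: (even_prime pp) => // p2'; rewrite p2' in p2.
  by rewrite -signr_odd op expr1.
case: (Firr _ _ hG) => hu.
  by move: Fnu; rewrite hG unitrMr ?unitrX // hu.
have hp1 : (0 < p.-1)%N by rewrite -subn1 subn_gt0 prime_gt1.
have hG' : G \is a GRing.unit by rewrite -(unitrX_pos G hp1).
by move: Fnu; rewrite hG unitrMr ?unitrX.

Qed.

Lemma incr_ge m (e : 'I_m -> nat) : increasing_seq e -> forall i : 'I_m, (i <= e i)%N.
Proof.
move=> he; suff H : forall k (hk : (k < m)%N), (k <= e (Ordinal hk))%N.
  by case=> k hk; exact: H.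
elim=> [//|k IH] hk.
have hk' : (k < m)%N by apply: ltnW.
apply: leq_ltn_trans (IH hk') _; exact: he.
Qed.

Lemma classical_of_det (L : fieldType) (D : nat -> L -> L) x y s :
  \det (@wmat L D x y s (fun k => nat_of_ord k)) != 0 -> classical D x y s.
Proof.
move=> hd; split => //.
move=> e' he' _.
case: (pickP (fun i : 'I_(Mdim s).+1 => e' i != i)) => [i0 hi0|hnone]; last first.
  by left=> i; have := hnone i; move/negbFE/eqP.
right.
have [i hi hmin] := @arg_minnP _ i0 (fun i => e' i != i) (fun i => nat_of_ord i) hi0.
exists i; split.
  by rewrite ltn_neqAle eq_sym hi incr_ge.
move=> j hj; apply/eqP; apply: contraTT hj => hne.
by rewrite -leqNgt; apply: hmin; rewrite eq_sym.
Qed.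

Section Ker.
Variables (L : fieldType) (D : nat -> L -> L) (x y : L).
Hypothesis D0 : forall f, D 0%N f = f.
Hypothesis DD : forall r f g, D r (f + g) = D r f + D r g.
Hypothesis DM : forall r f g, D r (f * g) = \sum_(i < r.+1) D i f * D (r - i)%N g.
Hypothesis D1 : forall r, (0 < r)%N -> D r 1 = 0.
Hypothesis Dx : forall r, (0 < r)%N -> D r x = (r == 1%N)%:R.

Definition W0 s := @wmat L D x y s (fun k => nat_of_ord k).

Definition XX : {poly L} := 'X + x%:P.

Lemma Tay_x : eqm 10 (Tay D x) XX.
Proof.
move=> k hk; rewrite coef_Tay // coefD coefX coefC /XX.
case: k hk => [|[|k]] hk /=; rewrite ?D0 ?Dx //= ?add0r ?addr0 //.
Qed.

Lemma Tay_mon i j : eqm 10 (Tay D (x ^+ i * y ^+ j)) (XX ^+ i * Tay D y ^+ j).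
Proof.
apply: eqm_trans (TayM DM _ _) _; apply: eqmM.
  by apply: eqm_trans (TayX D0 DM D1 _ _) _; apply: eqmX; exact: Tay_x.
exact: TayX.
Qed.

Definition mon s (c : nat) := nth (0%N, 0%N) (mons s) c.

Definition Fc s (c : 'I_(Mdim s).+1 -> L) : {poly L} :=
  \sum_(col < (Mdim s).+1) (c col)%:P * (XX ^+ (mon s col).1 * Tay D y ^+ (mon s col).2).


Lemma wmat_ker s (c : 'I_(Mdim s).+1 -> L) : (Mdim s < 10)%N ->
  (forall k : 'I_(Mdim s).+1,
     \sum_(col < (Mdim s).+1) c col * W0 s k col = (Fc c)`_k).
Proof.
move=> hs k; rewrite /Fc coef_sum; apply: eq_bigr => col _.
rewrite coefCM mxE -Tay_mon ?coef_Tay //; apply: leq_ltn_trans hs; exact: ltn_ord k.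
Qed.

Lemma det0_ker s : (Mdim s < 10)%N ->
  \det (W0 s) = 0 ->
  exists c : 'I_(Mdim s).+1 -> L, (exists col, c col != 0) /\ eqm (Mdim s).+1 (Fc c) 0.
Proof.
move=> hs hd.
have /det0P [v hv0 hv] : \det (W0 s)^T == 0 by rewrite det_tr hd.
exists (fun j => v 0 j); split.
  apply/existsP; apply: contraR hv0 => /existsPn hn; apply/eqP/rowP => j.
  by rewrite mxE; apply/eqP; move: (hn j); rewrite negbK.
move=> k hk; rewrite coef0 -(wmat_ker _ hs (Ordinal hk)).
move/rowP: hv => /(_ (Ordinal hk)); rewrite !mxE => h; rewrite -[RHS]h.
by apply: eq_bigr => j _; rewrite !mxE.
Qed.

Lemma ker_det0 s (c : 'I_(Mdim s).+1 -> L) : (Mdim s < 10)%N ->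
  (exists col, c col != 0) -> eqm (Mdim s).+1 (Fc c) 0 ->
  \det (W0 s) = 0.
Proof.
move=> hs [col hc] he; apply/eqP; rewrite -det_tr; apply/det0P.
exists (\row_j c j).
  by apply/eqP => /rowP /(_ col); rewrite !mxE; apply/eqP.
apply/rowP => k; rewrite !mxE -[RHS](coef0 _ k) -(he k (ltn_ord k)) -(wmat_ker _ hs).
by apply: eq_bigr => j _; rewrite !mxE.
Qed.

Lemma Fc_expand s (c : 'I_(Mdim s).+1 -> L) :
  Fc c = \sum_(j <- index_iota 0 (Mdim s).+1)
           (c (inord j))%:P * (XX ^+ (mon s j).1 * Tay D y ^+ (mon s j).2).
Proof.
rewrite /Fc big_mkord; apply: eq_bigr => j _; by rewrite inord_val.
Qed.
End Ker.

Lemma mons1 : mons 1 = [:: (0,0); (0,1); (1,0)]%N. Proof. by []. Qed.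
Lemma mons2 : mons 2 = [:: (0,0); (0,1); (0,2); (1,0); (1,1); (2,0)]%N. Proof. by []. Qed.
Lemma mons3 : mons 3 = [:: (0,0); (0,1); (0,2); (0,3); (1,0); (1,1); (1,2); (2,0); (2,1); (3,0)]%N.
Proof. by []. Qed.
Lemma iota1 : index_iota 0 (Mdim 1).+1 = [:: 0; 1; 2]%N. Proof. by []. Qed.
Lemma iota2 : index_iota 0 (Mdim 2).+1 = [:: 0; 1; 2; 3; 4; 5]%N. Proof. by []. Qed.
Lemma iota3 : index_iota 0 (Mdim 3).+1 = [:: 0; 1; 2; 3; 4; 5; 6; 7; 8; 9]%N. Proof. by []. Qed.


Section Coefs.
Variables (L : fieldType) (x : L).

Lemma coefXXM (Q : {poly L}) k :
  (XX x * Q)`_k = (if k is k'.+1 then Q`_k' else 0) + x * Q`_k.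
Proof. by rewrite /XX mulrDl coefD coefXM coefCM; case: k. Qed.

Lemma odeR0 (P Y : {poly L}) :
  (P * Y + (1 - P) * (XX x * Y^`()))`_0 = P`_0*Y`_0 + (0%:R*Y`_0 + x*1%:R*Y`_1) - P`_0*(0%:R*Y`_0 + x*1%:R*Y`_1).
Proof. by rewrite coefD mulrBl mul1r coefB !coefXXM !coefM !big_ord_recr !big_ord0 /= ?subSS ?subn0 ?sub0n !coefXXM !coef_deriv /=; ring. Qed.

Lemma odeR1 (P Y : {poly L}) :
  (P * Y + (1 - P) * (XX x * Y^`()))`_1 = P`_0*Y`_1 + P`_1*Y`_0 + (1%:R*Y`_1 + x*2%:R*Y`_2) - P`_0*(1%:R*Y`_1 + x*2%:R*Y`_2) - P`_1*(0%:R*Y`_0 + x*1%:R*Y`_1).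
Proof. by rewrite coefD mulrBl mul1r coefB !coefXXM !coefM !big_ord_recr !big_ord0 /= ?subSS ?subn0 ?sub0n !coefXXM !coef_deriv /=; ring. Qed.

Lemma odeR2 (P Y : {poly L}) :
  (P * Y + (1 - P) * (XX x * Y^`()))`_2 = P`_0*Y`_2 + P`_1*Y`_1 + P`_2*Y`_0 + (2%:R*Y`_2 + x*3%:R*Y`_3) - P`_0*(2%:R*Y`_2 + x*3%:R*Y`_3) - P`_1*(1%:R*Y`_1 + x*2%:R*Y`_2) - P`_2*(0%:R*Y`_0 + x*1%:R*Y`_1).
Proof. by rewrite coefD mulrBl mul1r coefB !coefXXM !coefM !big_ord_recr !big_ord0 /= ?subSS ?subn0 ?sub0n !coefXXM !coef_deriv /=; ring. Qed.

Lemma odeR3 (P Y : {poly L}) :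
  (P * Y + (1 - P) * (XX x * Y^`()))`_3 = P`_0*Y`_3 + P`_1*Y`_2 + P`_2*Y`_1 + P`_3*Y`_0 + (3%:R*Y`_3 + x*4%:R*Y`_4) - P`_0*(3%:R*Y`_3 + x*4%:R*Y`_4) - P`_1*(2%:R*Y`_2 + x*3%:R*Y`_3) - P`_2*(1%:R*Y`_1 + x*2%:R*Y`_2) - P`_3*(0%:R*Y`_0 + x*1%:R*Y`_1).
Proof. by rewrite coefD mulrBl mul1r coefB !coefXXM !coefM !big_ord_recr !big_ord0 /= ?subSS ?subn0 ?sub0n !coefXXM !coef_deriv /=; ring. Qed.

Lemma odeR4 (P Y : {poly L}) :
  (P * Y + (1 - P) * (XX x * Y^`()))`_4 = P`_0*Y`_4 + P`_1*Y`_3 + P`_2*Y`_2 + P`_3*Y`_1 + P`_4*Y`_0 + (4%:R*Y`_4 + x*5%:R*Y`_5) - P`_0*(4%:R*Y`_4 + x*5%:R*Y`_5) - P`_1*(3%:R*Y`_3 + x*4%:R*Y`_4) - P`_2*(2%:R*Y`_2 + x*3%:R*Y`_3) - P`_3*(1%:R*Y`_1 + x*2%:R*Y`_2) - P`_4*(0%:R*Y`_0 + x*1%:R*Y`_1).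
Proof. by rewrite coefD mulrBl mul1r coefB !coefXXM !coefM !big_ord_recr !big_ord0 /= ?subSS ?subn0 ?sub0n !coefXXM !coef_deriv /=; ring. Qed.

Lemma F2c0 (Yp : {poly L}) c0 c1 c2 c3 c4 c5 :
  (c0%:P + c1%:P * Yp + c2%:P * Yp^+2 + c3%:P * XX x + c4%:P * (XX x * Yp) + c5%:P * (XX x)^+2)`_0 = c0 + c1*Yp`_0 + c2*Yp`_0*Yp`_0 + c3*x + c4*x*Yp`_0 + c5*x^+2.
Proof. rewrite !coefD !coefCM ?expr2 ?coefXXM ?coefM; rewrite ?big_ord_recr ?big_ord0 /= ?subSS ?subn0 ?coef1 /XX ?coefD ?coefX ?coefC /=; ring. Qed.

Lemma F2c1 (Yp : {poly L}) c0 c1 c2 c3 c4 c5 :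
  (c0%:P + c1%:P * Yp + c2%:P * Yp^+2 + c3%:P * XX x + c4%:P * (XX x * Yp) + c5%:P * (XX x)^+2)`_1 = c1*Yp`_1 + c2*(Yp`_0*Yp`_1 + Yp`_1*Yp`_0) + c3 + c4*(x*Yp`_1 + Yp`_0) + c5*(2%:R*x).
Proof. rewrite !coefD !coefCM ?expr2 ?coefXXM ?coefM; rewrite ?big_ord_recr ?big_ord0 /= ?subSS ?subn0 ?coef1 /XX ?coefD ?coefX ?coefC /=; ring. Qed.

Lemma F2c2 (Yp : {poly L}) c0 c1 c2 c3 c4 c5 :
  (c0%:P + c1%:P * Yp + c2%:P * Yp^+2 + c3%:P * XX x + c4%:P * (XX x * Yp) + c5%:P * (XX x)^+2)`_2 = c1*Yp`_2 + c2*(Yp`_0*Yp`_2 + Yp`_1*Yp`_1 + Yp`_2*Yp`_0) + c4*(x*Yp`_2 + Yp`_1) + c5.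
Proof. rewrite !coefD !coefCM ?expr2 ?coefXXM ?coefM; rewrite ?big_ord_recr ?big_ord0 /= ?subSS ?subn0 ?coef1 /XX ?coefD ?coefX ?coefC /=; ring. Qed.

Lemma F2c3 (Yp : {poly L}) c0 c1 c2 c3 c4 c5 :
  (c0%:P + c1%:P * Yp + c2%:P * Yp^+2 + c3%:P * XX x + c4%:P * (XX x * Yp) + c5%:P * (XX x)^+2)`_3 = Yp`_3*(c1 + x*c4) + (Yp`_0*Yp`_3 + Yp`_1*Yp`_2 + Yp`_2*Yp`_1 + Yp`_3*Yp`_0)*c2 + Yp`_2*c4.
Proof. rewrite !coefD !coefCM ?expr2 ?coefXXM ?coefM; rewrite ?big_ord_recr ?big_ord0 /= ?subSS ?subn0 ?coef1 /XX ?coefD ?coefX ?coefC /=; ring. Qed.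

Lemma F2c4 (Yp : {poly L}) c0 c1 c2 c3 c4 c5 :
  (c0%:P + c1%:P * Yp + c2%:P * Yp^+2 + c3%:P * XX x + c4%:P * (XX x * Yp) + c5%:P * (XX x)^+2)`_4 = Yp`_4*(c1 + x*c4) + (Yp`_0*Yp`_4 + Yp`_1*Yp`_3 + Yp`_2*Yp`_2 + Yp`_3*Yp`_1 + Yp`_4*Yp`_0)*c2 + Yp`_3*c4.
Proof. rewrite !coefD !coefCM ?expr2 ?coefXXM ?coefM; rewrite ?big_ord_recr ?big_ord0 /= ?subSS ?subn0 ?coef1 /XX ?coefD ?coefX ?coefC /=; ring. Qed.

Lemma F2c5 (Yp : {poly L}) c0 c1 c2 c3 c4 c5 :
  (c0%:P + c1%:P * Yp + c2%:P * Yp^+2 + c3%:P * XX x + c4%:P * (XX x * Yp) + c5%:P * (XX x)^+2)`_5 = Yp`_5*(c1 + x*c4) + (Yp`_0*Yp`_5 + Yp`_1*Yp`_4 + Yp`_2*Yp`_3 + Yp`_3*Yp`_2 + Yp`_4*Yp`_1 + Yp`_5*Yp`_0)*c2 + Yp`_4*c4.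
Proof. rewrite !coefD !coefCM ?expr2 ?coefXXM ?coefM; rewrite ?big_ord_recr ?big_ord0 /= ?subSS ?subn0 ?coef1 /XX ?coefD ?coefX ?coefC /=; ring. Qed.

Lemma F1c0 (Yp : {poly L}) c0 c1 c2 :
  (c0%:P + c1%:P * Yp + c2%:P * XX x)`_0 = c0 + c1*Yp`_0 + c2*x.
Proof. rewrite !coefD !coefCM ?expr2 ?coefXXM ?coefM; rewrite ?big_ord_recr ?big_ord0 /= ?subSS ?subn0 ?coef1 /XX ?coefD ?coefX ?coefC /=; ring. Qed.

Lemma F1c1 (Yp : {poly L}) c0 c1 c2 :
  (c0%:P + c1%:P * Yp + c2%:P * XX x)`_1 = c1*Yp`_1 + c2.
Proof. rewrite !coefD !coefCM ?expr2 ?coefXXM ?coefM; rewrite ?big_ord_recr ?big_ord0 /= ?subSS ?subn0 ?coef1 /XX ?coefD ?coefX ?coefC /=; ring. Qed.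

Lemma F1c2 (Yp : {poly L}) c0 c1 c2 :
  (c0%:P + c1%:P * Yp + c2%:P * XX x)`_2 = c1*Yp`_2.
Proof. rewrite !coefD !coefCM ?expr2 ?coefXXM ?coefM; rewrite ?big_ord_recr ?big_ord0 /= ?subSS ?subn0 ?coef1 /XX ?coefD ?coefX ?coefC /=; ring. Qed.

Lemma Pc1 (P : {poly L}) : (XX x * P^`())`_0 = x * 1%:R * P`_1 + 0%:R * P`_0.
Proof. rewrite coefXXM !coef_deriv /=; ring. Qed.

Lemma Pc2 (P : {poly L}) : (XX x * P^`())`_1 = x * 2%:R * P`_2 + 1%:R * P`_1.
Proof. rewrite coefXXM !coef_deriv /=; ring. Qed.

Lemma Pc3 (P : {poly L}) : (XX x * P^`())`_2 = x * 3%:R * P`_3 + 2%:R * P`_2.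
Proof. rewrite coefXXM !coef_deriv /=; ring. Qed.

Lemma Pc4 (P : {poly L}) : (XX x * P^`())`_3 = x * 4%:R * P`_4 + 3%:R * P`_3.
Proof. rewrite coefXXM !coef_deriv /=; ring. Qed.

Lemma Pc5 (P : {poly L}) : (XX x * P^`())`_4 = x * 5%:R * P`_5 + 4%:R * P`_4.
Proof. rewrite coefXXM !coef_deriv /=; ring. Qed.

End Coefs.

Section Test.
Variables (L : fieldType) (D : nat -> L -> L) (x y : L).
Local Notation Y := (Tay D y).
Local Notation X := (XX x).
Lemma Fc2_exp (c : 'I_(Mdim 2).+1 -> L) : Fc D x y c =
  (c (inord 0))%:P + (c (inord 1))%:P * Y + (c (inord 2))%:P * Y^+2 + (c (inord 3))%:P * X
  + (c (inord 4))%:P * (X * Y) + (c (inord 5))%:P * X^+2.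
Proof. rewrite Fc_expand iota2 !big_cons big_nil /mon mons2 /=. ring. Qed.
Lemma Fc1_exp (c : 'I_(Mdim 1).+1 -> L) : Fc D x y c =
  (c (inord 0))%:P + (c (inord 1))%:P * Y + (c (inord 2))%:P * X.
Proof. rewrite Fc_expand iota1 !big_cons big_nil /mon mons1 /=. ring. Qed.
Lemma Fc3_exp (c : 'I_(Mdim 3).+1 -> L) : Fc D x y c =
  (c (inord 0))%:P + (c (inord 1))%:P * Y + (c (inord 2))%:P * Y^+2 + (c (inord 3))%:P * Y^+3
  + (c (inord 4))%:P * X + (c (inord 5))%:P * (X * Y) + (c (inord 6))%:P * (X * Y^+2)
  + (c (inord 7))%:P * X^+2 + (c (inord 8))%:P * (X^+2 * Y) + (c (inord 9))%:P * X^+3.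
Proof. rewrite Fc_expand iota3 !big_cons big_nil /mon mons3 /=. ring. Qed.
End Test.

Section Main.
Variables (p n : nat) (K L : fieldType) (iota : {rmorphism K -> L}) (a b : K).
Variables (x y : L) (D : nat -> L -> L).
Hypothesis pp : prime p.
Hypothesis p7 : (7 < p)%N.
Hypothesis n3 : (3 < n)%N.
Hypothesis hch : p \in [pchar L].
Hypothesis npn : ~~ (p %| n)%N.
Hypothesis curve : iota a * x ^+ n + iota b * y ^+ n = 1.
Hypothesis hD : hasse_wrt iota x D.

Let D0 : forall f, D 0%N f = f. Proof. by case: hD. Qed.
Let DD : forall r f g, D r (f + g) = D r f + D r g. Proof. by case: hD. Qed.
Let DM : forall r f g, D r (f * g) = \sum_(i < r.+1) D i f * D (r - i)%N g.
Proof. by case: hD. Qed.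
Let Dc : forall r c, (0 < r)%N -> D r (iota c) = 0. Proof. by case: hD. Qed.
Let Dx : forall r, (0 < r)%N -> D r x = (r == 1%N)%:R. Proof. by case: hD. Qed.
Let D1 : forall r, (0 < r)%N -> D r 1 = 0.
Proof. by move=> r hr; rewrite -(rmorph1 iota) Dc. Qed.

Local Notation Y := (Tay D y).
Local Notation X := (XX x).

Lemma Tay_c c : eqm 10 (Tay D (iota c)) (iota c)%:P.
Proof.
move=> k hk; rewrite coef_Tay // coefC; case: k hk => [|k] _; rewrite ?D0 ?Dc //.
Qed.

Lemma Tay_cf c f : eqm 10 (Tay D (iota c * f)) ((iota c)%:P * Tay D f).
Proof. apply: eqm_trans (TayM DM _ _) _; apply: eqmM => //; exact: Tay_c. Qed.

Lemma Tay_1 : eqm 10 (Tay D 1) 1.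
Proof. by move=> k hk; rewrite coef_Tay // coef1; case: k hk => [|k] _; rewrite ?D0 ?D1. Qed.

Lemma curve_eqm : eqm 10 ((iota a)%:P * X ^+ n + (iota b)%:P * Y ^+ n) 1.
Proof.
apply: eqm_trans (eqm_sym _) Tay_1; rewrite -curve (TayD DD).
apply: eqmD; (apply: eqm_trans (Tay_cf _ _) _; apply: eqmM => //).
  by apply: eqm_trans (TayX D0 DM D1 _ _) _; apply: eqmX; exact: Tay_x.
exact: TayX.
Qed.

Lemma natr_nz k : (0 < k)%N -> (k < p)%N -> (k%:R : L) != 0.
Proof. by move=> h0 hp; rewrite -(dvdn_pcharf hch) gtnNdvd. Qed.

Lemma nu_nz : (n%:R : L) != 0.
Proof. by rewrite -(dvdn_pcharf hch). Qed.

Lemma x_nz : x != 0.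
Proof.
apply/eqP => hx; have := @Dx 1%N (ltn0Sn 0); rewrite hx /=.
have -> : D 1 0 = 0.
  by apply: (@addrI _ (D 1 0)); rewrite -DD !addr0.
by move/eqP; rewrite eq_sym oner_eq0.
Qed.

Lemma coefX0 m : (X ^+ m)`_0 = x ^+ m.
Proof. by rewrite -horner_coef0 horner_exp /XX !hornerE. Qed.

Lemma coefX1 m : (X ^+ m)`_1 = m%:R * x ^+ m.-1.
Proof.
have -> : (X ^+ m)`_1 = ((X ^+ m)^`())`_0 by rewrite coef_deriv mulr1n.
have dX : X^`() = 1 by rewrite /XX derivD derivX derivC addr0.
by rewrite deriv_exp dX mul1r coefMn coefX0 mulr_natl.
Qed.

Lemma D1u : D 1 (iota a * x ^+ n) = iota a * (n%:R * x ^+ n.-1).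
Proof.
rewrite -(@coef_Tay _ D _ 1%N) // (Tay_cf _ _ (_ : 1 < 10)%N) //.
rewrite coefCM (TayX D0 DM D1 _ _ (_ : 1 < 10)%N) //.
by rewrite (eqmX _ (Tay_x D0 Dx) (_ : 1 < 10)%N) // coefX1.
Qed.

Lemma nonconst : a != 0 -> forall c, iota a * x ^+ n != iota c.
Proof.
move=> ha c; apply/eqP => h; have := D1u; rewrite h Dc // => /esym/eqP.
by rewrite !mulf_eq0 fmorph_eq0 (negbTE ha) (negbTE nu_nz) expf_eq0 (negbTE x_nz) andbF.
Qed.

Lemma eqm_eq N (P Q : {poly L}) : P = Q -> eqm N P Q. Proof. by move=> ->. Qed.

Lemma eqm_Mn0 N m (P : {poly L}) : (m%:R : L) != 0 -> eqm N (P *+ m) 0 -> eqm N P 0.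
Proof.
move=> hc h k hk; have := h k hk; rewrite coefMn coef0 -mulr_natl => /eqP.
by rewrite mulf_eq0 (negbTE hc) /= => /eqP ->.
Qed.

Lemma ode : eqm 9 ((iota a)%:P * X ^+ n * Y + (1 - (iota a)%:P * X ^+ n) * (X * Y^`())) 0.
Proof.
set P := (iota a)%:P * X ^+ n; set Q := (iota b)%:P * Y ^+ n.
have E := curve_eqm.
have dE : eqm 9 (P^`() + Q^`()) 0.
  by have := eqm_deriv E; rewrite derivD -polyC1 derivC.
have dX : X^`() = 1 by rewrite /XX derivD derivX derivC addr0.
have hn1 : n = n.-1.+1 by rewrite prednK // (leq_trans _ n3).
have eX : X ^+ n = X * X ^+ n.-1 by rewrite -exprS -hn1.
have eY : Y ^+ n = Y * Y ^+ n.-1 by rewrite -exprS -hn1.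
have hP' : X * P^`() = P *+ n.
  by rewrite /P derivM derivC mul0r add0r deriv_exp dX eX; ring.
have hQ' : Y * Q^`() = (Q * Y^`()) *+ n.
  by rewrite /Q derivM derivC mul0r add0r deriv_exp eY; ring.
have h1 : eqm 9 ((X * Y) * (P^`() + Q^`())) 0.
  by have := eqmM (@eqm_refl _ 9 (X * Y)) dE; rewrite mulr0.
have h2 : (X * Y) * (P^`() + Q^`()) = (P * Y + Q * (X * Y^`())) *+ n.
  have -> : (X * Y) * (P^`() + Q^`()) = Y * (X * P^`()) + X * (Y * Q^`()) by ring.
  by rewrite hP' hQ'; ring.
rewrite h2 in h1; apply: (eqm_Mn0 nu_nz); apply: eqm_trans _ h1.
apply: eqmMn; apply: eqmD => //; apply: eqmM => //.
move=> k hk; rewrite coefB; have := E k (ltnW hk); rewrite coefD => <-.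
by rewrite addrC addKr.
Qed.
Lemma hPder : X * ((iota a)%:P * X ^+ n)^`() = ((iota a)%:P * X ^+ n) *+ n.
Proof.
have dX : X^`() = 1 by rewrite /XX derivD derivX derivC addr0.
have hn1 : n = n.-1.+1 by rewrite prednK // (leq_trans _ n3).
have eX : X ^+ n = X * X ^+ n.-1 by rewrite -exprS -hn1.
by rewrite derivM derivC mul0r add0r deriv_exp dX eX; ring.
Qed.

Lemma Y0 : Y`_0 = y. Proof. by rewrite coef_Tay. Qed.

Lemma u_facts : a != 0 ->
  let u := iota a * x ^+ n in
  [/\ forall c, u - iota c != 0, 1 - u != 0 & y != 0].
Proof.
move=> ha u; have nc : forall c, u - iota c != 0 by move=> c; rewrite subr_eq0 nonconst.
have hu1 : 1 - u != 0 by rewrite subr_eq0 eq_sym -(rmorph1 iota) nonconst.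
split => //; apply: contraNneq hu1 => hy0.
by rewrite -curve /u addrC addKr hy0 expr0n /= gtn_eqF ?mulr0 // (leq_trans _ n3).
Qed.

Lemma sigma2 : a != 0 -> \det (W0 D x y 2) = 0 ->
  (n%:R - 1) ^+ 4 * (2%:R * n%:R - 1) * (n%:R - 2%:R) * (n%:R + 1) = 0 :> L.
Proof.
move=> ha hdet.
have [nc hu1 hy] := u_facts ha.
set u := iota a * x ^+ n in nc hu1.
set P := (iota a)%:P * X ^+ n.
have P0 : P`_0 = u by rewrite coefCM coefX0.
have hx := x_nz.
have h2 : (2%:R : L) != 0 by apply: natr_nz => //; apply: leq_trans p7.
have h3 : (3%:R : L) != 0 by apply: natr_nz => //; apply: leq_trans p7.
have h5 : (5%:R : L) != 0 by apply: natr_nz => //; apply: leq_trans p7.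
have hp : forall k, (XX x * P^`())`_k = n%:R * P`_k.
  by move=> k; rewrite hPder coefMn mulr_natl.
have hp1 := Pc1 x P; rewrite hp in hp1.
have hp2 := Pc2 x P; rewrite hp in hp2.
have hp3 := Pc3 x P; rewrite hp in hp3.
have hp4 := Pc4 x P; rewrite hp in hp4.
have hp5 := Pc5 x P; rewrite hp in hp5.
have hO := ode.
have hR0 := odeR0 x P Y; rewrite hO // coef0 in hR0.
have hR1 := odeR1 x P Y; rewrite hO // coef0 in hR1.
have hR2 := odeR2 x P Y; rewrite hO // coef0 in hR2.
have hR3 := odeR3 x P Y; rewrite hO // coef0 in hR3.
have hR4 := odeR4 x P Y; rewrite hO // coef0 in hR4.
rewrite P0 in hp1 hR0 hR1 hR2 hR3 hR4.
have [f1 f2 f3 f4 f5] := ycoefs hx hu1 h2 h3 h5 (esym hp1) (esym hp2) (esym hp3) (esym hp4) (esym hp5)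
   (esym hR0) (esym hR1) (esym hR2) (esym hR3) (esym hR4).
have [c [[col hc] hker]] := det0_ker D0 DM D1 Dx (s:=2) (isT : (Mdim 2 < 10)%N) hdet.
rewrite Fc2_exp in hker.
have e0 := hker 0%N isT; rewrite F2c0 coef0 in e0.
have e1 := hker 1%N isT; rewrite F2c1 coef0 in e1.
have e2 := hker 2%N isT; rewrite F2c2 coef0 in e2.
have e3 := hker 3%N isT; rewrite F2c3 coef0 in e3.
have e4 := hker 4%N isT; rewrite F2c4 coef0 in e4.
have e5 := hker 5%N isT; rewrite F2c5 coef0 in e5.
case: (eqVneq (det3 (Y`_3) (Y`_0 * Y`_3 + Y`_1 * Y`_2 + Y`_2 * Y`_1 + Y`_3 * Y`_0) (Y`_2)
   (Y`_4) (Y`_0 * Y`_4 + Y`_1 * Y`_3 + Y`_2 * Y`_2 + Y`_3 * Y`_1 + Y`_4 * Y`_0) (Y`_3)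
   (Y`_5) (Y`_0 * Y`_5 + Y`_1 * Y`_4 + Y`_2 * Y`_3 + Y`_3 * Y`_2 + Y`_4 * Y`_1 + Y`_5 * Y`_0) (Y`_4)) 0)
  => [hd0|hdn]; last first.
  have [v1 v2 v3] := det3_ker e3 e4 e5 hdn.
  have c1 : c (inord 1) = 0 by move: v1; rewrite v3 mulr0 addr0.
  have c5 : c (inord 5) = 0 by rewrite -e2 c1 v2 v3; ring.
  have c3 : c (inord 3) = 0 by rewrite -e1 c1 v2 v3 c5; ring.
  have c0 : c (inord 0) = 0 by rewrite -e0 c1 v2 v3 c5 c3; ring.
  move: hc; rewrite -(inord_val col); have := ltn_ord col.
  by case: (nat_of_ord col) => [|[|[|[|[|[|]]]]]] // _; rewrite ?c0 ?c1 ?v2 ?c3 ?v3 ?c5 eqxx.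
have := det_fact hx hu1 h2 h3 h5 f1 f2 f3 f4 f5; rewrite hd0 => /esym hd.
have h4 : 4%:R != 0 :> L by rewrite (natrM L 2 2) mulf_neq0.
have h8 : 8%:R != 0 :> L by rewrite (natrM L 2 4) mulf_neq0.
have h24 : 24%:R != 0 :> L by rewrite (natrM L 8 3) mulf_neq0.
have h120 : 120%:R != 0 :> L by rewrite (natrM L 5 24) mulf_neq0.
have h8640 : 8640%:R != 0 :> L by rewrite (natrM L 120 72) (natrM L 8 9) (natrM L 3 3) !mulf_neq0.
have i2 : iota 2%:R = 2%:R := rmorph_nat _ _.
have iv : iota (2%:R^-1) = 2%:R^-1 by rewrite fmorphV rmorph_nat.
have im : iota (-1) = -1 by rewrite rmorphN rmorph1.
have i0 : iota 0 = 0 := rmorph0 _.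
have u0 : u != 0 by have := nc 0; rewrite i0 subr0.
have hz0 : u / (1 - u) != 0 by rewrite mulf_neq0 ?invr_eq0.
have hz1 : 1 + u / (1 - u) != 0.
  have -> : 1 + u / (1 - u) = (1 - u)^-1 by fs.
  by rewrite invr_eq0.
have hz2 : u / (1 - u) - 1 != 0.
  have -> : u / (1 - u) - 1 = 2%:R * (u - iota (2%:R^-1)) / (1 - u) by rewrite iv; fs.
  by rewrite !mulf_neq0 ?invr_eq0 ?nc.
have hz3 : 2%:R * (u / (1 - u)) + 1 != 0.
  have -> : 2%:R * (u / (1 - u)) + 1 = (u - iota (-1)) / (1 - u) by rewrite im; fs.
  by rewrite !mulf_neq0 ?invr_eq0 ?nc.
have hz4 : u / (1 - u) + 2%:R != 0.
  have -> : u / (1 - u) + 2%:R = - (u - iota 2%:R) / (1 - u) by rewrite i2; fs.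
  by rewrite !mulf_neq0 ?invr_eq0 ?oppr_eq0 ?nc.
have hK : Y`_0 ^+ 4 / x ^+ 11 / 8640%:R != 0.
  by rewrite !mulf_neq0 ?invr_eq0 ?expf_neq0 // Y0.
have hQ : (u / (1 - u)) ^+ 4 * (1 + u / (1 - u)) ^+ 4 * (u / (1 - u) - 1)
     * (2%:R * (u / (1 - u)) + 1) * (u / (1 - u) + 2%:R) != 0.
  apply: mulf_neq0 hz4; apply: mulf_neq0 hz3; apply: mulf_neq0 hz2.
  by apply: mulf_neq0; apply: expf_neq0.
move/eqP: hd; rewrite mulf_eq0 (negbTE hQ) orbF mulf_eq0 (negbTE hK) /=.
by move/eqP.
Qed.
Lemma p11 : (10 < p)%N.
Proof.
case: (ltnP 10 p) => // hle.
have : (p = 8 \/ p = 9 \/ p = 10)%N by lia.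
by case=> [|[|]] hp; move: pp; rewrite hp.
Qed.

Lemma decomp0 (Q : {poly L}) : Q = (Q`_0)%:P + 'X * drop_poly 1 Q.
Proof.
apply/polyP => k; rewrite coefD coefC coefXM coef_drop_poly.
by case: k => [|k] //=; rewrite ?add0r ?addr0 // addn1.
Qed.

Lemma frob_eqm (Q : {poly L}) : eqm 10 (Q ^+ p) ((Q`_0 ^+ p)%:P).
Proof.
have hcP : p \in [pchar {poly L}] by rewrite pchar_poly.
move=> k hk; rewrite {1}(decomp0 Q) frobD // exprMn coefD -rmorphXn /= coefXnM.
have -> : (k < p)%N by apply: leq_trans hk _; apply: ltnW; exact: p11.
by rewrite addr0.
Qed.

Lemma sigma1 : a != 0 -> \det (W0 D x y 1) = 0 -> n%:R = 1 :> L.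
Proof.
move=> ha hdet.
have [nc hu1 hy] := u_facts ha.
set u := iota a * x ^+ n in nc hu1.
set P := (iota a)%:P * X ^+ n.
have P0 : P`_0 = u by rewrite coefCM coefX0.
have hx := x_nz.
have h2 : (2%:R : L) != 0 by apply: natr_nz => //; apply: leq_trans p7.
have h3 : (3%:R : L) != 0 by apply: natr_nz => //; apply: leq_trans p7.
have h5 : (5%:R : L) != 0 by apply: natr_nz => //; apply: leq_trans p7.
have hp : forall k, (XX x * P^`())`_k = n%:R * P`_k.
  by move=> k; rewrite hPder coefMn mulr_natl.
have hp1 := Pc1 x P; rewrite hp in hp1.
have hp2 := Pc2 x P; rewrite hp in hp2.
have hp3 := Pc3 x P; rewrite hp in hp3.
have hp4 := Pc4 x P; rewrite hp in hp4.
have hp5 := Pc5 x P; rewrite hp in hp5.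
have hO := ode.
have hR0 := odeR0 x P Y; rewrite hO // coef0 in hR0.
have hR1 := odeR1 x P Y; rewrite hO // coef0 in hR1.
have hR2 := odeR2 x P Y; rewrite hO // coef0 in hR2.
have hR3 := odeR3 x P Y; rewrite hO // coef0 in hR3.
have hR4 := odeR4 x P Y; rewrite hO // coef0 in hR4.
rewrite P0 in hp1 hR0 hR1 hR2 hR3 hR4.
have [f1 f2 f3 f4 f5] := ycoefs hx hu1 h2 h3 h5 (esym hp1) (esym hp2) (esym hp3) (esym hp4) (esym hp5)
   (esym hR0) (esym hR1) (esym hR2) (esym hR3) (esym hR4).
have [c [[col hc] hker]] := det0_ker D0 DM D1 Dx (s:=1) (isT : (Mdim 1 < 10)%N) hdet.
rewrite Fc1_exp in hker.
have e0 := hker 0%N isT; rewrite F1c0 coef0 in e0.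
have e1 := hker 1%N isT; rewrite F1c1 coef0 in e1.
have e2 := hker 2%N isT; rewrite F1c2 coef0 in e2.
case: (eqVneq (c (inord 1)) 0) => [c1|c1].
  have c2 : c (inord 2) = 0 by rewrite -e1 c1; ring.
  have c0 : c (inord 0) = 0 by rewrite -e0 c1 c2; ring.
  move: hc; rewrite -(inord_val col); have := ltn_ord col.
  by case: (nat_of_ord col) => [|[|[|]]] // _; rewrite ?c0 ?c1 ?c2 eqxx.
move/eqP: e2; rewrite mulf_eq0 (negbTE c1) /= f2 => hE.
have i0 : iota 0 = 0 := rmorph0 _.
have u0 : u != 0 by have := nc 0; rewrite i0 subr0.
have eE : E2 (n%:R) (u / (1 - u)) = (1 - n%:R) * u / (2%:R * (1 - u) ^+ 2).
  by rewrite /E2; fs.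
apply/eqP; move: hE; apply: contraLR => hn1; rewrite eE.
have h1n : 1 - n%:R != 0 :> L by rewrite subr_eq0 eq_sym.
by rewrite !mulf_neq0 ?invr_eq0 ?mulf_neq0 ?expf_neq0 ?Y0; rewrite ?fmorph_eq0 //.

Qed.

Lemma eqm_0M N (A B : {poly L}) : eqm N A 0 -> eqm N (A * B) 0.
Proof. by move=> h; have := eqmM h (@eqm_refl _ N B); rewrite mul0r. Qed.
Lemma eqm_0D N (A B : {poly L}) : eqm N A 0 -> eqm N B 0 -> eqm N (A + B) 0.
Proof. by move=> h1 h2; have := eqmD h1 h2; rewrite addr0. Qed.
Lemma eqm_sub0 N (A B : {poly L}) : eqm N A B -> eqm N (A - B) 0.
Proof. by move=> h k hk; rewrite coefB h // subrr coef0. Qed.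

Lemma conic3 (c : nat -> L) (G : {poly L}) :
  c 1%N != 0 \/ c 2%N != 0 \/ c 5%N != 0 ->
  G = (c 0%N)%:P + (c 1%N)%:P * Y + (c 2%N)%:P * Y^+2 + (c 3%N)%:P * Y^+3
  + (c 4%N)%:P * X + (c 5%N)%:P * (X * Y) + (c 6%N)%:P * (X * Y^+2)
  + (c 7%N)%:P * X^+2 + (c 8%N)%:P * (X^+2 * Y) + (c 9%N)%:P * X^+3 ->
  eqm 10 G 0 -> \det (W0 D x y 3) = 0.
Proof.
move=> hc hG hG0.
pose cc := fun j : 'I_(Mdim 3).+1 => c (nat_of_ord j).
have ci : forall k, (k < 10)%N -> cc (inord k) = c k by move=> k hk; rewrite /cc inordK.
apply: (ker_det0 D0 DM D1 Dx (c := cc) (isT : (Mdim 3 < 10)%N)).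
  case: hc => [h|[h|h]]; [exists (inord 1) | exists (inord 2) | exists (inord 5)]; by rewrite ci.
by rewrite Fc3_exp !ci // -hG.
Qed.

Lemma a0_case : a = 0 -> \det (W0 D x y 3) = 0.
Proof.
move=> ha.
have hO := ode; rewrite ha rmorph0 mul0r subr0 mul1r mul0r add0r in hO.
have hY' : forall k, (k < 9)%N -> (Y^`())`_k = 0.
  elim=> [|k IH] hk.
    have := hO 0%N hk; rewrite coefXXM coef0 add0r => /eqP.
    by rewrite mulf_eq0 (negbTE x_nz) /= => /eqP.
  have := hO k.+1 hk; rewrite coefXXM coef0 IH ?add0r; last by apply: ltnW.
  by move/eqP; rewrite mulf_eq0 (negbTE x_nz) /= => /eqP.
have hYk : forall k, (0 < k)%N -> (k < 10)%N -> Y`_k = 0.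
  case=> [//|k] _ hk; have := hY' k hk; rewrite coef_deriv -mulr_natr => /eqP.
  rewrite mulf_eq0 (negbTE (natr_nz _ _)) ?orbF //; first by move/eqP.
  by apply: leq_trans hk _; apply: ltnW; exact: p11.
apply: (@conic3 (fun k => if k == 0%N then y else if k == 1%N then -1 else 0) (y%:P - Y)).
- by left; rewrite /= oppr_eq0 oner_eq0.
- by rewrite /= !polyC0 polyCN polyC1; ring.
move=> k hk; rewrite coefB coefC coef0; case: k hk => [|k] hk /=.
  by rewrite Y0 subrr.
by rewrite hYk // subrr.
Qed.

Lemma natr_inj i j : (i < p)%N -> (j < p)%N -> (i%:R : L) = j%:R -> i = j.
Proof.
wlog hij : i j / (i <= j)%N.
  move=> H hi hj e; case: (leqP i j) => h; first exact: H.
  by apply/esym/H => //; apply: ltnW.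
move=> hi hj e; apply/eqP; rewrite eqn_leq hij /=.
have : (p %| j - i)%N by rewrite (dvdn_pcharf hch) natrB // e subrr.
case: (posnP (j - i)) => [|h]; first by move/eqP; rewrite subn_eq0.
move/(dvdn_leq h) => h'; have : (j - i < p)%N by apply: leq_ltn_trans hj; exact: leq_subr.
by rewrite ltnNge h'.
Qed.

Lemma det3_zero : a != 0 ->
  (n%:R - 1) ^+ 4 * (2%:R * n%:R - 1) * (n%:R - 2%:R) * (n%:R + 1) = 0 :> L ->
  \det (W0 D x y 3) = 0.
Proof.
move=> ha hP.
have [nc hu1 hy] := u_facts ha.
set n0 := (n %% p)%N; set m := (n %/ p)%N.
have hn : n = (p * m + n0)%N by rewrite /m /n0 mulnC -divn_eq.
have hnu : (n%:R : L) = n0%:R by rewrite {1}hn natrD natrM (pcharf0 hch) mul0r add0r.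
have n0p : (n0 < p)%N by rewrite ltn_mod prime_gt0.
have n00 : (0 < n0)%N.
  rewrite lt0n; apply: contra npn => /eqP h0; apply/dvdnP; exists m; by rewrite hn h0 addn0 mulnC.
have hb : iota b != 0 /\ y != 0.
  by move: hu1; rewrite -curve addrC addKr mulf_eq0 negb_or expf_eq0 => /andP [-> /negP]; case: (n).
case: hb => hb _.
set a1 := iota a * (x ^+ p) ^+ m; set b1 := iota b * (y ^+ p) ^+ m.
have hb1 : b1 != 0 by rewrite mulf_neq0 // !expf_neq0.
have X0 : X`_0 = x by rewrite /XX coefD coefX coefC add0r.
have fX : eqm 10 (X ^+ p) ((x ^+ p)%:P) by have := frob_eqm X; rewrite X0.
have fY : eqm 10 (Y ^+ p) ((y ^+ p)%:P) by have := frob_eqm Y; rewrite Y0.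
have E : eqm 10 (a1%:P * X ^+ n0 + b1%:P * Y ^+ n0) 1.
  apply: eqm_trans _ curve_eqm; apply: eqm_sym; apply: eqmD.
    rewrite hn exprD exprM /a1 polyCM rmorphXn -mulrA; apply: eqmM => //.
    by apply: eqmM => //; apply: eqmX.
  rewrite hn exprD exprM /b1 polyCM rmorphXn -mulrA; apply: eqmM => //.
  by apply: eqmM => //; apply: eqmX.
have p2 : (2 < p)%N by apply: leq_trans p7.
have cases : [\/ n0 = 1%N, n0 = 2%N, (n0.+1 = p)%N | (2 * n0 = p.+1)%N].
  move/eqP: hP; rewrite hnu !mulf_eq0 !orbb => /orP[/orP[/orP[h|h]|h]|h].
  - apply: Or41; apply: natr_inj => //; first exact: prime_gt1.
    by apply/eqP; rewrite -subr_eq0.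
  - apply: Or44.
    have e : ((2 * n0 - 1)%:R : L) = 0.
      by rewrite natrB ?muln_gt0 // natrM; apply/eqP.
    move/eqP: e; rewrite -(dvdn_pcharf hch) => /dvdnP [q hq].
    have q1 : q = 1%N by nia.
    by rewrite q1 mul1n in hq; lia.
  - apply: Or42; apply: natr_inj => //.
    by apply/eqP; rewrite -subr_eq0.
  - apply: Or43.
    have e : ((n0.+1)%:R : L) = 0 by rewrite -addn1 natrD; apply/eqP.
    move/eqP: e; rewrite -(dvdn_pcharf hch) => /dvdnP [q hq].
    have q1 : q = 1%N by nia.
    by rewrite q1 mul1n in hq.
have hs : forall A B : {poly L}, eqm 10 A B -> eqm 10 (A - B) 0 := fun A B h => eqm_sub0 h.
case: cases => hn0.
- (* n0 = 1 : a line *)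
  rewrite hn0 !expr1 in E.
  apply: (@conic3 (fun k => if k == 0%N then -1 else if k == 1%N then b1
                            else if k == 4%N then a1 else 0) (a1%:P * X + b1%:P * Y - 1)).
  + by left.
  + by rewrite /= !polyC0 polyCN polyC1; ring.
  + exact: hs.
- (* n0 = 2 : a conic *)
  rewrite hn0 in E.
  apply: (@conic3 (fun k => if k == 0%N then -1 else if k == 2%N then b1
                            else if k == 7%N then a1 else 0) (a1%:P * X^+2 + b1%:P * Y^+2 - 1)).
  + by right; left.
  + by rewrite /= !polyC0 polyCN polyC1; ring.
  + exact: hs.
-
  have eXp : X ^+ p = X * X ^+ n0 by rewrite -exprS hn0.
  have eYp : Y ^+ p = Y * Y ^+ n0 by rewrite -exprS hn0.
  apply: (@conic3 (fun k => if k == 1%N then a1 * x ^+ p else if k == 4%N then b1 * y ^+ p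
                            else if k == 5%N then -1 else 0)
     ((a1 * x ^+ p)%:P * Y + (b1 * y ^+ p)%:P * X - X * Y)).
  + by right; right; rewrite /= oppr_eq0 oner_eq0.
  + by rewrite /= !polyC0 polyCN polyC1; ring.
  + have -> : (a1 * x ^+ p)%:P * Y + (b1 * y ^+ p)%:P * X - X * Y =
        (a1%:P * X ^+ n0 + b1%:P * Y ^+ n0 - 1) * (X * Y)
        + ((x ^+ p)%:P - X * X ^+ n0) * (a1%:P * Y) + ((y ^+ p)%:P - Y * Y ^+ n0) * (b1%:P * X).
      by rewrite !polyCM; ring.
    apply: eqm_0D; [apply: eqm_0D|]; apply: eqm_0M; first exact: hs.
      by rewrite -eXp; apply: hs; apply: eqm_sym.
    by rewrite -eYp; apply: hs; apply: eqm_sym.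
-
  set A := a1 ^+ 2 * x ^+ p; set B := b1 ^+ 2 * y ^+ p.
  set V := a1%:P * X ^+ n0; set W := b1%:P * Y ^+ n0.
  have eX2 : X ^+ n0 * X ^+ n0 = X ^+ p * X by rewrite -exprD addnn -mul2n hn0 exprS mulrC.
  have eY2 : Y ^+ n0 * Y ^+ n0 = Y ^+ p * Y by rewrite -exprD addnn -mul2n hn0 exprS mulrC.
  have hal : eqm 10 (V ^+ 2 - A%:P * X) 0.
    have -> : V ^+ 2 - A%:P * X = (X ^+ p - (x ^+ p)%:P) * ((a1%:P) ^+ 2 * X).
      have -> : V ^+ 2 = (a1%:P) ^+ 2 * (X ^+ n0 * X ^+ n0) by rewrite /V; ring.
      have -> : A%:P = (a1%:P) ^+ 2 * (x ^+ p)%:P by rewrite /A polyCM rmorphXn.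
      by rewrite eX2; ring.
    by apply: eqm_0M; apply: hs.
  have hbe : eqm 10 (W ^+ 2 - B%:P * Y) 0.
    have -> : W ^+ 2 - B%:P * Y = (Y ^+ p - (y ^+ p)%:P) * ((b1%:P) ^+ 2 * Y).
      have -> : W ^+ 2 = (b1%:P) ^+ 2 * (Y ^+ n0 * Y ^+ n0) by rewrite /W; ring.
      have -> : B%:P = (b1%:P) ^+ 2 * (y ^+ p)%:P by rewrite /B polyCM rmorphXn.
      by rewrite eY2; ring.
    by apply: eqm_0M; apply: hs.
  have hga : eqm 10 (V + W - 1) 0 by apply: hs.
  apply: (@conic3 (fun k => if k == 0%N then 1 else if k == 1%N then - (2%:R * B)
        else if k == 2%N then B ^+ 2 else if k == 4%N then - (2%:R * A)
        else if k == 5%N then - (2%:R * A * B) else if k == 7%N then A ^+ 2 else 0)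
     ((1 + A%:P * X - B%:P * Y) ^+ 2 - (4%:R * A)%:P * X)).
  + by right; left; rewrite /= sqrf_eq0 /B mulf_neq0 ?expf_neq0.
  + by rewrite /= !polyC0 !polyCN !polyCM !rmorphXn polyC1 !rmorph_nat; ring.
  + have -> : (1 + A%:P * X - B%:P * Y) ^+ 2 - (4%:R * A)%:P * X =
       (- (V + W - 1) * (1 - V + W) - (V ^+ 2 - A%:P * X) + (W ^+ 2 - B%:P * Y))
        * (1 + A%:P * X - B%:P * Y + 2%:R * V) + (V ^+ 2 - A%:P * X) * 4%:R.
      have -> : (4%:R * A)%:P = 4%:R * A%:P by rewrite polyCM rmorph_nat.
      by ring.
    apply: eqm_0D; last exact: eqm_0M hal.
    apply: eqm_0M; apply: eqm_0D; last exact: hbe.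
    apply: eqm_0D; last by have := eqmN hal; rewrite oppr0.
    by rewrite mulNr; have := eqmN (eqm_0M (1 - V + W) hga); rewrite oppr0.
Qed.

End Main.



Unset Implicit Arguments.

Theorem lemma3p2 (p h n : nat) (a b : Fbar p) (L : fieldType)
  (iota : {rmorphism Fbar p -> L}) (x y : L) (D : nat -> L -> L) :
  prime p -> (7 < p)%N -> (0 < h)%N -> (3 < n)%N ->
  a ^+ (p ^ h) = a -> b ^+ (p ^ h) = b ->
  irreducible_elt (fermat_poly a b n) ->
  iota a * x ^+ n + iota b * y ^+ n = 1 ->
  generated_by iota x y ->
  hasse_wrt iota x D ->
  nonclassical D x y 1 \/ nonclassical D x y 2 ->
  nonclassical D x y 3.
Proof.
move=> pp p7 _ n3 _ _ hirr curve _ hD hnc hcl.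
have hch : p \in [pchar L] := rmorph_pchar iota (char_Fbar pp).
have npn : ~~ (p %| n)%N.
  by apply: irr_ndvd hirr => //; [apply: leq_trans p7 | apply: leq_trans n3].
have hd : \det (W0 D x y 3) != 0 by case: hcl.
have [D0 DD DM Dc Dx] := hD.
have D1 : forall r, (0 < r)%N -> D r 1 = 0 by move=> r hr; rewrite -(rmorph1 iota) Dc.
suff : \det (W0 D x y 3) = 0 by move=> h0; rewrite h0 eqxx in hd.
case: (eqVneq a 0) => ha.
  exact: (a0_case pp p7 n3 hch npn curve hD ha).
apply: (det3_zero pp p7 n3 hch npn curve hD ha).
have hdet : forall s, nonclassical D x y s -> \det (W0 D x y s) = 0.
  move=> s hs; apply/eqP; apply/negPn/negP => hh; apply: hs; exact: classical_of_det.
case: hnc => hs.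
  have := sigma1 p7 n3 hch npn curve hD ha (hdet _ hs) => ->.
  by rewrite subrr expr0n mul0r !mul0r.
exact: (sigma2 p7 n3 hch npn curve hD ha (hdet _ hs)).
Qed.
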